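(* Let $n\ge 1$ and let $F(z)=\sum_{k=1}^\infty b_k z^k$ be an extremal function for the problem $$ M_n=\sup\Big\{ \sum_{k=1}^n k|c_k|^2 \,:\, \|f\|_{\mathcal{B}}\le 1,\ f(z)=\sum_{k=1}^\infty c_k z^k\Big\}, $$ i.e. $\|F\|_{\mathcal{B}}\le 1$ and $\sum_{k=1}^n k|b_k|^2=M_n$. Then $b_n b_{n+1}=0$, i.e. $b_n=0$ or $b_{n+1}=0$.
   Context: $\mathbb{D}$ is the open unit disc. The Bloch space $\mathcal{B}$ consists of analytic functions $f$ on $\mathbb{D}$ with finite norm $\|f\|_{\mathcal{B}}=|f(0)|+\sup_{z\in\mathbb{D}}(1-|z|^2)|f'(z)|$. *)

(* Defs.v *)
From Stdlib Require Import Reals.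
From Coquelicot Require Import Coquelicot.
Open Scope R_scope.

(* Sum of a complex series, componentwise (meaningful when it converges). *)
Definition Cseries (a : nat -> C) : C :=
  (Series (fun k => fst (a k)), Series (fun k => snd (a k))).

(* An analytic function on the unit disc D, given by its Taylor coefficients
   c : f(z) = sum_k c_k z^k, the series converging (absolutely) on D,
   i.e. radius of convergence >= 1. *)
Definition analytic_on_disc (c : nat -> C) : Prop :=
  forall z : C, Cmod z < 1 -> ex_series (fun k => Cmod ((c k * pow_n z k)%C)).

Definition fval (c : nat -> C) (z : C) : C := Cseries (fun k => (c k * pow_n z k)%C).
Definition fderiv (c : nat -> C) (z : C) : C :=
  Cseries (fun k => (RtoC (INR k) * c k * pow_n z (k - 1))%C).

Definition bloch_norm (c : nat -> C) : Rbar :=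
  Rbar_plus (Cmod (c 0%nat))
    (Lub_Rbar (fun r => exists z : C, Cmod z < 1 /\
                 r = (1 - Cmod z ^ 2) * Cmod (fderiv c z))).

Definition admissible (c : nat -> C) : Prop :=
  analytic_on_disc c /\ c 0%nat = RtoC 0 /\ Rbar_le (bloch_norm c) 1.

(* sum_{k=1}^n k |c_k|^2  (the k = 0 term vanishes) *)
Definition partial_energy (n : nat) (c : nat -> C) : R :=
  sum_n (fun k => INR k * Cmod (c k) ^ 2) n.

Definition M (n : nat) : Rbar :=
  Lub_Rbar (fun r => exists c, admissible c /\ r = partial_energy n c).

(* Main.v *)
Require Import Defs.
From Stdlib Require Import Reals Lra Lia.
From Coquelicot Require Import Coquelicot.
Open Scope R_scope.

Lemma pow_n_Cpow (z:C) k : pow_n z k = Cpow z k.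
Proof. induction k. reflexivity. simpl. rewrite IHk. reflexivity. Qed.

Definition acs (u : nat -> C) := ex_series (fun k => Cmod (u k)).

Lemma Rabs_fst_le (x : C) : Rabs (fst x) <= Cmod x.
Proof. apply re_le_Cmod. Qed.
Lemma Rabs_snd_le (x : C) : Rabs (snd x) <= Cmod x.
Proof. destruct x as [a b]. unfold Cmod; simpl. rewrite <- sqrt_Rsqr_abs.
 apply sqrt_le_1_alt. unfold Rsqr. nra. Qed.
Lemma Cmod_le_sum (x : C) : Cmod x <= Rabs (fst x) + Rabs (snd x).
Proof. destruct x as [a b]. unfold Cmod; simpl.
 rewrite <- (sqrt_Rsqr (Rabs a + Rabs b)).
 2:{ generalize (Rabs_pos a) (Rabs_pos b); lra. }
 apply sqrt_le_1_alt. unfold Rsqr. generalize (Rabs_pos a) (Rabs_pos b); intros.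
 assert (a*a = Rabs a * Rabs a) by (rewrite <- Rabs_mult; rewrite Rabs_pos_eq; nra).
 assert (b*b = Rabs b * Rabs b) by (rewrite <- Rabs_mult; rewrite Rabs_pos_eq; nra).
 nra. Qed.

Lemma acs_fst u : acs u -> ex_series (fun k => fst (u k)).
Proof. intro H. apply ex_series_Rabs. apply (@ex_series_le R_AbsRing R_CompleteNormedModule _ (fun k => Cmod (u k))); auto.
 intros k. change (norm (Rabs (fst (u k)))) with (Rabs (Rabs (fst (u k)))).
 rewrite Rabs_Rabsolu. apply Rabs_fst_le. Qed.
Lemma acs_snd u : acs u -> ex_series (fun k => snd (u k)).
Proof. intro H. apply ex_series_Rabs. apply (@ex_series_le R_AbsRing R_CompleteNormedModule _ (fun k => Cmod (u k))); auto.
 intros k. change (norm (Rabs (snd (u k)))) with (Rabs (Rabs (snd (u k)))).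
 rewrite Rabs_Rabsolu. apply Rabs_snd_le. Qed.

Lemma acs_le u (b : nat -> R) : (forall k, Cmod (u k) <= b k) -> ex_series b -> acs u.
Proof. intros H Hb. unfold acs. apply (@ex_series_le R_AbsRing R_CompleteNormedModule _ b); auto.
 intros k. change (norm (Cmod (u k))) with (Rabs (Cmod (u k))).
 rewrite Rabs_pos_eq by apply Cmod_ge_0. auto. Qed.

Lemma acs_plus u v : acs u -> acs v -> acs (fun k => (u k + v k)%C).
Proof. intros Hu Hv. apply (acs_le _ (fun k => Cmod (u k) + Cmod (v k))).
 intros; apply Cmod_triangle. apply (ex_series_plus _ _ Hu Hv). Qed.

Lemma acs_scal c u : acs u -> acs (fun k => (c * u k)%C).
Proof. intros Hu. apply (acs_le _ (fun k => Cmod c * Cmod (u k))).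
 intros; rewrite Cmod_mult; lra. apply (ex_series_scal_l (Cmod c) _ Hu). Qed.

Lemma acs_ext u v : (forall k, u k = v k) -> acs u -> acs v.
Proof. intros H Hu. apply (acs_le _ (fun k => Cmod (u k))). intros; rewrite H; lra. auto. Qed.

Lemma Cseries_ext u v : (forall k, u k = v k) -> Cseries u = Cseries v.
Proof. intros H. unfold Cseries. f_equal; apply Series_ext; intros; rewrite H; auto. Qed.

Lemma Cseries_plus u v : acs u -> acs v -> Cseries (fun k => (u k + v k)%C) = (Cseries u + Cseries v)%C.
Proof. intros Hu Hv. unfold Cseries. apply injective_projections; simpl.
 - rewrite <- Series_plus by (apply acs_fst; auto). apply Series_ext; intros; reflexivity.
 - rewrite <- Series_plus by (apply acs_snd; auto). apply Series_ext; intros; reflexivity.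
Qed.

Lemma Cseries_scal c u : acs u -> Cseries (fun k => (c * u k)%C) = (c * Cseries u)%C.
Proof. intros Hu. unfold Cseries. destruct c as [c1 c2]. apply injective_projections; simpl.
 - rewrite <- !Series_scal_l. rewrite <- Series_minus.
   apply Series_ext; intros; reflexivity.
   apply (ex_series_scal_l c1 _ (acs_fst _ Hu)).
   apply (ex_series_scal_l c2 _ (acs_snd _ Hu)).
 - rewrite <- !Series_scal_l. rewrite <- Series_plus.
   apply Series_ext; intros; reflexivity.
   apply (ex_series_scal_l c1 _ (acs_snd _ Hu)).
   apply (ex_series_scal_l c2 _ (acs_fst _ Hu)).
Qed.

Lemma acs_shift u : acs u -> acs (fun k => u (S k)).
Proof. intros H. unfold acs. apply (ex_series_incr_1 (fun k => Cmod (u k))). auto. Qed.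

Lemma Cseries_shift u : acs u -> Cseries u = (u 0%nat + Cseries (fun k => u (S k)))%C.
Proof. intros Hu. unfold Cseries. apply injective_projections; simpl.
 - rewrite (Series_incr_1 (fun k => fst (u k))) by (apply acs_fst; auto). reflexivity.
 - rewrite (Series_incr_1 (fun k => snd (u k))) by (apply acs_snd; auto). reflexivity.
Qed.

Lemma fst_sum_n (u : nat -> C) N : fst (sum_n u N) = sum_n (fun k => fst (u k)) N.
Proof. induction N. rewrite !sum_O. auto. rewrite !sum_Sn. simpl. rewrite <- IHN. reflexivity. Qed.
Lemma snd_sum_n (u : nat -> C) N : snd (sum_n u N) = sum_n (fun k => snd (u k)) N.
Proof. induction N. rewrite !sum_O. auto. rewrite !sum_Sn. simpl. rewrite <- IHN. reflexivity. Qed.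

Lemma Series_tail (a : nat -> R) N : ex_series a ->
  Series a - sum_n a N = Series (fun k => a (S N + k)%nat).
Proof. intros H. rewrite (Series_incr_n a (S N)) by (auto; lia). simpl.
 rewrite sum_n_Reals. ring. Qed.

Lemma Cseries_tail u N : acs u ->
  Cmod (Cseries u - sum_n u N) <= 2 * (Series (fun k => Cmod (u k)) - sum_n (fun k => Cmod (u k)) N).
Proof. intros Hu. eapply Rle_trans. apply Cmod_le_sum.
 assert (E1: fst (Cseries u - sum_n u N)%C = Series (fun k => fst (u k)) - sum_n (fun k => fst (u k)) N) by (rewrite <- fst_sum_n; reflexivity).
 assert (E2: snd (Cseries u - sum_n u N)%C = Series (fun k => snd (u k)) - sum_n (fun k => snd (u k)) N) by (rewrite <- snd_sum_n; reflexivity).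
 rewrite E1, E2.
 rewrite !Series_tail by (auto; apply acs_fst || apply acs_snd; auto).
 assert (Ht: ex_series (fun k => Cmod (u (S N + k)%nat))) by (apply (ex_series_incr_n (fun k => Cmod (u k))); auto).
 assert (forall f : C -> R, (forall x, Rabs (f x) <= Cmod x) -> Rabs (Series (fun k => f (u (S N + k)%nat))) <= Series (fun k => Cmod (u (S N + k)%nat))).
 { intros f Hf. eapply Rle_trans. apply Series_Rabs.
   apply (@ex_series_le R_AbsRing R_CompleteNormedModule _ (fun k => Cmod (u (S N + k)%nat))); auto. intros k.
   change (norm (Rabs (f (u (S N + k)%nat)))) with (Rabs (Rabs (f (u (S N + k)%nat)))).
   rewrite Rabs_Rabsolu; auto.
   apply Series_le; auto. intros; split; auto using Rabs_pos. }
 generalize (H fst Rabs_fst_le) (H snd Rabs_snd_le). intros; lra.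
Qed.
Lemma Cmod_sum_n (u : nat -> C) N : Cmod (sum_n u N) <= sum_n (fun k => Cmod (u k)) N.
Proof. induction N. rewrite !sum_O; lra. rewrite !sum_Sn.
 eapply Rle_trans. apply Cmod_triangle. change (plus (sum_n (fun k => Cmod (u k)) N) (Cmod (u (S N)))) with (sum_n (fun k => Cmod (u k)) N + Cmod (u (S N))). lra. Qed.

Lemma Series_nonneg (a : nat -> R) : (forall k, 0 <= a k) -> ex_series a -> 0 <= Series a.
Proof. intros H He. replace 0 with (Series (fun k => 0 * a k)).
 apply Series_le; auto. intros k; generalize (H k); split; lra.
 rewrite Series_scal_l. ring. Qed.

Lemma sum_le_Series (a : nat -> R) N : (forall k, 0 <= a k) -> ex_series a -> sum_n a N <= Series a.
Proof. intros H He. assert (0 <= Series a - sum_n a N). rewrite Series_tail by auto.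
 apply Series_nonneg. auto. apply (ex_series_incr_n a (S N)); auto. lra. Qed.

Lemma term_le_Series (a : nat -> R) N : (forall k, 0 <= a k) -> ex_series a -> a N <= Series a.
Proof. intros H He. eapply Rle_trans. 2: apply (sum_le_Series a N); auto.
 destruct N. rewrite sum_O; lra. rewrite sum_Sn.
 assert (0 <= sum_n a N). { clear He. induction N. rewrite sum_O; auto. rewrite sum_Sn. 
   change (plus (sum_n a N) (a (S N))) with (sum_n a N + a (S N)). generalize (H (S N)); lra. }
 change (plus (sum_n a N) (a (S N))) with (sum_n a N + a (S N)). lra. Qed.

Definition cprod (u v : nat -> C) (n : nat) : C := sum_n (fun k => (u k * v (n - k)%nat)%C) n.

Lemma cprod_acs u v : acs u -> acs v -> acs (cprod u v).
Proof. intros Hu Hv.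
 apply (acs_le _ (fun n => sum_f_R0 (fun k => Cmod (u k) * Cmod (v (n - k)%nat)) n)).
 - intros n. unfold cprod. eapply Rle_trans. apply Cmod_sum_n. rewrite sum_n_Reals.
   right. apply sum_eq. intros; apply Cmod_mult.
 - exists (Series (fun k => Cmod (u k)) * Series (fun k => Cmod (v k))). apply (is_series_mult_pos (fun k => Cmod (u k)) (fun k => Cmod (v k))). apply Series_correct; exact Hu. apply Series_correct; exact Hv.
   intros; apply Cmod_ge_0. intros; apply Cmod_ge_0.
Qed.

Lemma cprod_Cseries u v : acs u -> acs v -> Cseries (cprod u v) = (Cseries u * Cseries v)%C.
Proof. intros Hu Hv.
 assert (M: forall a b : nat -> R, ex_series (fun k => Rabs (a k))  -> ex_series (fun k => Rabs (b k)) ->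
   is_series (fun n => sum_f_R0 (fun k => a k * b (n - k)%nat) n) (Series a * Series b)).
 { intros a b Ha Hb. apply is_series_mult; auto; apply Series_correct; apply ex_series_Rabs; auto. }
 assert (F1: ex_series (fun k => Rabs (fst (u k)))).
 { apply (@ex_series_le R_AbsRing R_CompleteNormedModule _ (fun k => Cmod (u k))); auto. intros k.
   change (norm (Rabs (fst (u k)))) with (Rabs (Rabs (fst (u k)))). rewrite Rabs_Rabsolu. apply Rabs_fst_le. }
 assert (F2: ex_series (fun k => Rabs (snd (u k)))).
 { apply (@ex_series_le R_AbsRing R_CompleteNormedModule _ (fun k => Cmod (u k))); auto. intros k.
   change (norm (Rabs (snd (u k)))) with (Rabs (Rabs (snd (u k)))). rewrite Rabs_Rabsolu. apply Rabs_snd_le. }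
 assert (G1: ex_series (fun k => Rabs (fst (v k)))).
 { apply (@ex_series_le R_AbsRing R_CompleteNormedModule _ (fun k => Cmod (v k))); auto. intros k.
   change (norm (Rabs (fst (v k)))) with (Rabs (Rabs (fst (v k)))). rewrite Rabs_Rabsolu. apply Rabs_fst_le. }
 assert (G2: ex_series (fun k => Rabs (snd (v k)))).
 { apply (@ex_series_le R_AbsRing R_CompleteNormedModule _ (fun k => Cmod (v k))); auto. intros k.
   change (norm (Rabs (snd (v k)))) with (Rabs (Rabs (snd (v k)))). rewrite Rabs_Rabsolu. apply Rabs_snd_le. }
 generalize (M _ _ F1 G1) (M _ _ F2 G2) (M _ _ F1 G2) (M _ _ F2 G1). intros H11 H22 H12 H21.
 unfold Cseries. apply injective_projections.
 - change (fst (Cseries u * Cseries v)%C) with (Series (fun k => fst (u k)) * Series (fun k => fst (v k)) - Series (fun k => snd (u k)) * Series (fun k => snd (v k))).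
   change (Series (fun k => fst (cprod u v k)) = Series (fun k => fst (u k)) * Series (fun k => fst (v k)) - Series (fun k => snd (u k)) * Series (fun k => snd (v k))). apply is_series_unique.
   eapply is_series_ext. 2: apply (is_series_minus _ _ _ _ H11 H22).
   intros n. unfold cprod. rewrite fst_sum_n, sum_n_Reals.
   change (plus (sum_f_R0 (fun k => fst (u k) * fst (v (n - k)%nat)) n) (opp (sum_f_R0 (fun k => snd (u k) * snd (v (n - k)%nat)) n))) with (sum_f_R0 (fun k => fst (u k) * fst (v (n - k)%nat)) n - sum_f_R0 (fun k => snd (u k) * snd (v (n - k)%nat)) n).
   rewrite <- minus_sum. apply sum_eq. intros; reflexivity.
 - change (snd (Cseries u * Cseries v)%C) with (Series (fun k => fst (u k)) * Series (fun k => snd (v k)) + Series (fun k => snd (u k)) * Series (fun k => fst (v k))).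
   change (Series (fun k => snd (cprod u v k)) = Series (fun k => fst (u k)) * Series (fun k => snd (v k)) + Series (fun k => snd (u k)) * Series (fun k => fst (v k))). apply is_series_unique.
   eapply is_series_ext. 2: apply (is_series_plus _ _ _ _ H12 H21).
   intros n. unfold cprod. rewrite snd_sum_n, sum_n_Reals.
   change (plus (sum_f_R0 (fun k => fst (u k) * snd (v (n - k)%nat)) n) (sum_f_R0 (fun k => snd (u k) * fst (v (n - k)%nat)) n)) with (sum_f_R0 (fun k => fst (u k) * snd (v (n - k)%nat)) n + sum_f_R0 (fun k => snd (u k) * fst (v (n - k)%nat)) n).
   rewrite <- plus_sum. apply sum_eq. intros; reflexivity.
Qed.
Ltac Cring := match goal with |- ?a = ?b => change (@eq C a b) end; ring.
Ltac Cfield := match goal with |- ?a = ?b => change (@eq C a b) end; field.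
Lemma Cpow_add (z : C) i j : Cpow z (i + j) = (Cpow z i * Cpow z j)%C.
Proof. induction i; simpl. ring. rewrite IHi. ring. Qed.
Lemma Cpow_mult (x y : C) j : Cpow (x * y) j = (Cpow x j * Cpow y j)%C.
Proof. induction j; simpl. ring. rewrite IHj. ring. Qed.
Lemma RtoC_sum_n (f : nat -> R) N : RtoC (sum_n f N) = sum_n (fun k => RtoC (f k)) N.
Proof. induction N. rewrite !sum_O; auto. rewrite !sum_Sn. rewrite <- IHN.
 change (plus (sum_n f N) (f (S N))) with (sum_n f N + f (S N)). rewrite RtoC_plus. reflexivity. Qed.
Lemma sum_n_constC (c : C) N : sum_n (fun _ => c) N = (RtoC (INR (S N)) * c)%C.
Proof. induction N. rewrite sum_O. simpl. ring. rewrite sum_Sn, IHN.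
 change (plus (RtoC (INR (S N)) * c)%C c) with (RtoC (INR (S N)) * c + c)%C.
 rewrite (S_INR (S N)). rewrite RtoC_plus. Cring. Qed.
Lemma sum_n_multC_r (u : nat -> C) (c : C) N : sum_n (fun k => (u k * c)%C) N = (sum_n u N * c)%C.
Proof. induction N. rewrite !sum_O; auto. rewrite !sum_Sn, IHN.
 change (plus (sum_n u N * c)%C (u (S N) * c)%C = (plus (sum_n u N) (u (S N)) * c)%C).
 change plus with Cplus. Cring. Qed.
Lemma sum_n_multC_l (u : nat -> C) (c : C) N : sum_n (fun k => (c * u k)%C) N = (c * sum_n u N)%C.
Proof. induction N. rewrite !sum_O; auto. rewrite !sum_Sn, IHN.
 change plus with Cplus. Cring. Qed.
Lemma sum_n_plusC (u v : nat -> C) N : sum_n (fun k => (u k + v k)%C) N = (sum_n u N + sum_n v N)%C.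
Proof. apply (sum_n_plus u v N). Qed.

Lemma Cseries_zero u : (forall k, u k = RtoC 0) -> Cseries u = RtoC 0.
Proof. intros H. unfold Cseries. rewrite (Series_ext _ (fun k => 0 * 0)), (Series_ext (fun k => snd (u k)) (fun k => 0 * 0)).
 rewrite Series_scal_l. apply injective_projections; simpl; ring.
 intros; rewrite H; simpl; ring. intros; rewrite H; simpl; ring. Qed.

Definition ev (a : nat -> C) (z : C) : C := Cseries (fun j => (a j * Cpow z j)%C).
Definition acv (a : nat -> C) (z : C) : Prop := acs (fun j => (a j * Cpow z j)%C).

Lemma ev_cprod a b z : acv a z -> acv b z -> acv (cprod a b) z /\ ev (cprod a b) z = (ev a z * ev b z)%C.
Proof. intros Ha Hb.
 assert (E: forall n, (cprod a b n * Cpow z n)%C = cprod (fun j => (a j * Cpow z j)%C) (fun j => (b j * Cpow z j)%C) n).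
 { intros n. unfold cprod. rewrite <- sum_n_multC_r. apply sum_n_ext_loc. intros k Hk.
   assert (Cpow z n = (Cpow z k * Cpow z (n - k))%C) by (rewrite <- Cpow_add; f_equal; lia).
   rewrite H. Cring. }
 split.
 - unfold acv. apply (acs_ext (cprod (fun j => (a j * Cpow z j)%C) (fun j => (b j * Cpow z j)%C))).
   intros; rewrite E; auto. apply cprod_acs; auto.
 - unfold ev. rewrite (Cseries_ext _ (cprod (fun j => (a j * Cpow z j)%C) (fun j => (b j * Cpow z j)%C))) by auto.
   apply cprod_Cseries; auto.
Qed.

Lemma acv_plus a b z : acv a z -> acv b z -> acv (fun j => (a j + b j)%C) z.
Proof. intros Ha Hb. unfold acv. eapply acs_ext. 2: apply (acs_plus _ _ Ha Hb). intros; simpl; ring. Qed.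
Lemma ev_plus a b z : acv a z -> acv b z -> ev (fun j => (a j + b j)%C) z = (ev a z + ev b z)%C.
Proof. intros Ha Hb. unfold ev. rewrite <- Cseries_plus by auto. apply Cseries_ext; intros; ring. Qed.
Lemma acv_scal c a z : acv a z -> acv (fun j => (c * a j)%C) z.
Proof. intros Ha. unfold acv. eapply acs_ext. 2: apply (acs_scal c _ Ha). intros; simpl; ring. Qed.
Lemma ev_scal c a z : acv a z -> ev (fun j => (c * a j)%C) z = (c * ev a z)%C.
Proof. intros Ha. unfold ev. rewrite <- Cseries_scal by auto. apply Cseries_ext; intros; ring. Qed.
Lemma acv_ext a b z : (forall j, a j = b j) -> acv a z -> acv b z.
Proof. intros H Ha. unfold acv. eapply acs_ext. 2: apply Ha. intros; simpl; rewrite H; auto. Qed.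
Lemma ev_ext a b z : (forall j, a j = b j) -> ev a z = ev b z.
Proof. intros H. unfold ev. apply Cseries_ext; intros; rewrite H; auto. Qed.

Lemma acv_sum (f : nat -> nat -> C) N z : (forall k, acv (f k) z) -> acv (fun j => sum_n (fun k => f k j) N) z.
Proof. intros H. induction N.
 - eapply acv_ext. 2: apply (H 0%nat). intros; rewrite sum_O; auto.
 - eapply acv_ext. 2: apply (acv_plus _ _ _ IHN (H (S N))). intros; rewrite sum_Sn; auto.
Qed.
Lemma ev_sum (f : nat -> nat -> C) N z : (forall k, acv (f k) z) -> ev (fun j => sum_n (fun k => f k j) N) z = sum_n (fun k => ev (f k) z) N.
Proof. intros H. induction N.
 - rewrite sum_O. apply ev_ext. intros; rewrite sum_O; auto.
 - rewrite sum_Sn. rewrite (ev_ext _ (fun j => (sum_n (fun k => f k j) N + f (S N) j)%C)).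
   rewrite ev_plus, IHN. reflexivity. apply acv_sum; auto. auto. intros; rewrite sum_Sn; auto.
Qed.

Lemma geom_acs (q : C) : Cmod q < 1 -> acs (fun j => Cpow q j).
Proof. intros Hq. unfold acs. eapply ex_series_ext. 2: apply (ex_series_geom (Cmod q)).
 intros; simpl; rewrite Cmod_pow; auto. rewrite Rabs_pos_eq; auto using Cmod_ge_0. Qed.
Lemma geom_Cseries (q : C) : Cmod q < 1 -> Cseries (fun j => Cpow q j) = (/ (RtoC 1 - q))%C.
Proof. intros Hq. assert (H := geom_acs q Hq).
 assert (q <> RtoC 1). { intro E. rewrite E, Cmod_1 in Hq. lra. }
 assert (Hn : (RtoC 1 - q)%C <> RtoC 0). { intro E. apply H0. apply Ceq_minus in E. 
   rewrite <- E. reflexivity. }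
 set (S := Cseries (fun j => Cpow q j)).
 assert (E : S = (RtoC 1 + q * S)%C). { unfold S at 1. rewrite Cseries_shift by auto.
   rewrite (Cseries_ext _ (fun k => (q * Cpow q k)%C)) by reflexivity. rewrite Cseries_scal by auto. reflexivity. }
 assert (E2 : (S * (RtoC 1 - q))%C = RtoC 1). { transitivity (S - q * S)%C. Cring. rewrite E at 1. Cring. }
 replace S with (S * (RtoC 1 - q) * / (RtoC 1 - q))%C. rewrite E2. Cring.
 field. auto.
Qed.
Lemma pow_le_1 x n : 0 <= x <= 1 -> x ^ n <= 1.
Proof. intros H. rewrite <- (pow1 n). apply pow_incr. lra. Qed.
Lemma pow_decr x m n : 0 <= x <= 1 -> (m <= n)%nat -> x ^ n <= x ^ m.
Proof. intros H Hmn. replace n with (m + (n - m))%nat by lia. rewrite pow_add.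
 generalize (pow_le x m (proj1 H)) (pow_le_1 x (n - m) H) (pow_le x (n-m) (proj1 H)). nra. Qed.
Definition Phi (t : R) (m : nat) : R := match m with 0%nat => t | S m' => (1 - t^2) * (-t)^m' end.
Definition cprodR (u v : nat -> R) (n : nat) : R := sum_n (fun k => u k * v (n - k)%nat) n.
Definition dserR (a : nat -> R) (j : nat) : R := INR (S j) * a (S j).
Fixpoint P (t : R) (k : nat) : nat -> R :=
  match k with 0%nat => fun j => if Nat.eqb j 0 then 1 else 0 | S k' => cprodR (P t k') (Phi t) end.
Definition toC (a : nat -> R) : nat -> C := fun j => RtoC (a j).

Lemma toC_cprod u v j : toC (cprodR u v) j = cprod (toC u) (toC v) j.
Proof. unfold toC, cprodR, cprod. rewrite RtoC_sum_n. apply sum_n_ext. intros; apply RtoC_mult. Qed.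

Lemma Cmod_lt1_nz (t : R) (z : C) : Rabs t < 1 -> Cmod z < 1 -> (RtoC 1 + RtoC t * z)%C <> RtoC 0.
Proof. intros Ht Hz E. assert (E2 : (RtoC t * z)%C = RtoC (-1)).
 { replace (RtoC t * z)%C with ((RtoC 1 + RtoC t * z) - RtoC 1)%C by Cring. rewrite E. 
   apply injective_projections; simpl; ring. }
 assert (Cmod (RtoC t * z) = 1). { rewrite E2, Cmod_R. rewrite Rabs_left; lra. }
 rewrite Cmod_mult, Cmod_R in H. generalize (Rabs_pos t) (Cmod_ge_0 z). intros. nra. Qed.

Lemma geom_acv (t : R) (z : C) : Rabs t < 1 -> Cmod z < 1 -> acv (toC (fun j => (-t)^j)) z.
Proof. intros Ht Hz. unfold acv. eapply acs_ext. 2: apply (geom_acs (RtoC (-t) * z)%C).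
 intros k. unfold toC. rewrite Cpow_mult, RtoC_pow. reflexivity.
 rewrite Cmod_mult, Cmod_R, Rabs_Ropp. generalize (Rabs_pos t) (Cmod_ge_0 z). intros. nra. Qed.

Lemma geom_ev (t : R) (z : C) : Rabs t < 1 -> Cmod z < 1 -> ev (toC (fun j => (-t)^j)) z = (/ (RtoC 1 + RtoC t * z))%C.
Proof. intros Ht Hz. unfold ev. rewrite (Cseries_ext _ (fun j => Cpow (RtoC (-t) * z)%C j)).
 rewrite geom_Cseries. f_equal. rewrite RtoC_opp. Cring.
 rewrite Cmod_mult, Cmod_R, Rabs_Ropp. generalize (Rabs_pos t) (Cmod_ge_0 z). intros. nra.
 intros k. unfold toC. rewrite Cpow_mult, RtoC_pow. reflexivity. Qed.

Lemma Phi_le1 t m : Rabs t < 1 -> Rabs (Phi t m) <= 1.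
Proof. intros Ht. destruct m; simpl. lra. rewrite Rabs_mult, <- RPow_abs, Rabs_Ropp.
 destruct (Rabs_def2 _ _ Ht) as [H1 H2].
 assert (Rabs (1 - t*(t*1)) <= 1). { apply Rabs_le. nra. }
 assert (Rabs t ^ m <= 1). { apply pow_le_1. split. apply Rabs_pos. lra. }
 generalize (pow_le (Rabs t) m (Rabs_pos t)) (Rabs_pos (1 - t*(t*1))). intros; nra. Qed.
Lemma Phi_acv t z : Rabs t < 1 -> Cmod z < 1 -> acv (toC (Phi t)) z.
Proof. intros Ht Hz. apply (acs_le _ (fun j => Cmod z ^ j)).
 intros j. unfold toC. rewrite Cmod_mult, Cmod_R, Cmod_pow.
 generalize (Phi_le1 t j Ht) (pow_le (Cmod z) j (Cmod_ge_0 z)). nra.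
 apply ex_series_geom. rewrite Rabs_pos_eq; auto using Cmod_ge_0. Qed.

Definition phi (t : R) (z : C) : C := ((z + RtoC t) / (RtoC 1 + RtoC t * z))%C.
Definition dphi (t : R) (z : C) : C := (RtoC (1 - t^2) / ((RtoC 1 + RtoC t * z) * (RtoC 1 + RtoC t * z)))%C.

Lemma Phi_ev t z : Rabs t < 1 -> Cmod z < 1 -> ev (toC (Phi t)) z = phi t z.
Proof. intros Ht Hz. unfold ev. rewrite Cseries_shift by (apply Phi_acv; auto).
 rewrite (Cseries_ext _ (fun k => ((RtoC (1 - t^2) * z) * (toC (fun j => ((-t)^j)%R) k * Cpow z k))%C)).
 rewrite Cseries_scal by (apply geom_acv; auto). fold (ev (toC (fun j => (-t)^j)) z).
 rewrite geom_ev by auto. unfold phi. simpl. generalize (Cmod_lt1_nz t z Ht Hz). intros Hn.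
 unfold toC. simpl. rewrite !RtoC_minus, !RtoC_mult. Cfield. auto.
 intros k. unfold toC. simpl. rewrite RtoC_mult. Cring. Qed.

Lemma geom_cprod t j : cprodR (fun j => (-t)^j) (fun j => (-t)^j) j = INR (S j) * (-t)^j.
Proof. unfold cprodR. rewrite (sum_n_ext_loc _ (fun _ => (-t)^j)). apply sum_n_const.
 intros k Hk. rewrite <- pow_add. f_equal. lia. Qed.

Lemma dPhi_eq t j : toC (dserR (Phi t)) j = (RtoC (1 - t^2) * cprod (toC (fun j => ((-t)^j)%R)) (toC (fun j => ((-t)^j)%R)) j)%C.
Proof. rewrite <- toC_cprod. unfold toC. rewrite geom_cprod. rewrite <- RtoC_mult. f_equal.
 unfold dserR. simpl Phi. ring. Qed.

Lemma dPhi_acv_ev t z : Rabs t < 1 -> Cmod z < 1 -> acv (toC (dserR (Phi t))) z /\ ev (toC (dserR (Phi t))) z = dphi t z.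
Proof. intros Ht Hz. destruct (ev_cprod _ _ z (geom_acv t z Ht Hz) (geom_acv t z Ht Hz)) as [H1 H2].
 split. eapply acv_ext. intros j; symmetry; apply dPhi_eq. apply acv_scal; auto.
 rewrite (ev_ext _ _ z (dPhi_eq t)). rewrite ev_scal by auto. rewrite H2, geom_ev by auto.
 unfold dphi. generalize (Cmod_lt1_nz t z Ht Hz). intros Hn. Cfield. auto. Qed.

Lemma leibniz (a b : nat -> R) j : dserR (cprodR a b) j = cprodR (dserR a) b j + cprodR a (dserR b) j.
Proof. unfold dserR, cprodR. rewrite !sum_n_Reals.
 transitivity (sum_f_R0 (fun k => INR k * a k * b (S j - k)%nat) (S j) + sum_f_R0 (fun k => INR (S j - k) * a k * b (S j - k)%nat) (S j)).
 - rewrite <- plus_sum. rewrite scal_sum. apply sum_eq. intros i Hi. rewrite minus_INR by lia. ring.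
 - f_equal.
   + rewrite decomp_sum by lia. simpl pred. simpl INR at 1. rewrite Rmult_0_l, Rmult_0_l, Rplus_0_l.
     apply sum_eq. intros i Hi. reflexivity.
   + rewrite tech5. rewrite Nat.sub_diag. simpl INR at 2. rewrite Rmult_0_l, Rmult_0_l, Rplus_0_r.
     apply sum_eq. intros i Hi. replace (S j - i)%nat with (S (j - i)) by lia. ring.
Qed.
Lemma acv_bounded a z : (forall j, Cmod (a j) <= 1) -> Cmod z < 1 -> acv a z.
Proof. intros H Hz. apply (acs_le _ (fun j => Cmod z ^ j)).
 intros j. rewrite Cmod_mult, Cmod_pow. generalize (H j) (pow_le (Cmod z) j (Cmod_ge_0 z)). nra.
 apply ex_series_geom. rewrite Rabs_pos_eq; auto using Cmod_ge_0. Qed.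

Lemma P_ev t z k : Rabs t < 1 -> Cmod z < 1 ->
  acv (toC (P t k)) z /\ ev (toC (P t k)) z = Cpow (phi t z) k /\
  acv (toC (dserR (P t k))) z /\
  ev (toC (dserR (P t k))) z = (RtoC (INR k) * Cpow (phi t z) (k - 1) * dphi t z)%C.
Proof. intros Ht Hz. destruct (dPhi_acv_ev t z Ht Hz) as [dA dE].
 induction k as [|k IH].
 - assert (A0 : acv (toC (P t 0)) z).
   { apply acv_bounded; auto. intros j. unfold toC. rewrite Cmod_R. simpl. destruct (Nat.eqb j 0); rewrite ?Rabs_R1, ?Rabs_R0; lra. }
   assert (B0 : forall j, toC (dserR (P t 0)) j = RtoC 0).
   { intros j. unfold toC, dserR. simpl. f_equal. ring. }
   split; [auto|]. split.
   + unfold ev. rewrite Cseries_shift by auto. rewrite Cseries_zero. unfold toC; simpl. Cring.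
     intros k. unfold toC. simpl. Cring.
   + split. eapply acv_ext. intros j; symmetry; apply B0. apply acv_bounded; auto. intros; rewrite Cmod_0; lra.
     unfold ev. rewrite Cseries_zero. simpl. Cring. intros k. rewrite B0. Cring.
 - destruct IH as [A1 [E1 [A2 E2]]].
   destruct (ev_cprod _ _ z A1 (Phi_acv t z Ht Hz)) as [A3 E3].
   destruct (ev_cprod _ _ z A2 (Phi_acv t z Ht Hz)) as [A4 E4].
   destruct (ev_cprod _ _ z A1 dA) as [A5 E5].
   assert (Q1 : forall j, toC (P t (S k)) j = cprod (toC (P t k)) (toC (Phi t)) j).
   { intros j. simpl. apply toC_cprod. }
   assert (Q2 : forall j, toC (dserR (P t (S k))) j = (cprod (toC (dserR (P t k))) (toC (Phi t)) j + cprod (toC (P t k)) (toC (dserR (Phi t))) j)%C).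
   { intros j. unfold toC at 1. simpl P. rewrite leibniz, RtoC_plus. rewrite <- !toC_cprod. reflexivity. }
   split. eapply acv_ext. intros j; symmetry; apply Q1. auto.
   split. rewrite (ev_ext _ _ z Q1), E3, E1, Phi_ev by auto. simpl. Cring.
   split. eapply acv_ext. intros j; symmetry; apply Q2. apply acv_plus; auto.
   rewrite (ev_ext _ _ z Q2), ev_plus, E4, E5, E2, E1, Phi_ev, dE by auto.
   destruct k as [|k].
   + simpl. Cring.
   + replace (S (S k) - 1)%nat with (S k) by lia. replace (S k - 1)%nat with k by lia.
     rewrite (S_INR (S k)), RtoC_plus. simpl Cpow. Cring.
Qed.
Lemma phi_bloch t z : Rabs t < 1 -> Cmod z < 1 ->
  Cmod (phi t z) < 1 /\ (1 - Cmod z ^ 2) * Cmod (dphi t z) = 1 - Cmod (phi t z) ^ 2.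
Proof. intros Ht Hz. generalize (Cmod_lt1_nz t z Ht Hz). intros Hn.
 assert (HA : 0 < Cmod (RtoC 1 + RtoC t * z)%C) by (apply Cmod_gt_0; auto).
 set (A := Cmod (RtoC 1 + RtoC t * z)%C) in *.
 set (B := Cmod (z + RtoC t)%C).
 assert (Key : A ^ 2 - B ^ 2 = (1 - t^2) * (1 - Cmod z ^ 2)).
 { unfold A, B. rewrite !Cmod2_alt. destruct z as [x y]. simpl. ring. }
 assert (E1 : Cmod (phi t z) = B / A). { unfold phi. rewrite Cmod_div by auto. reflexivity. }
 assert (E2 : Cmod (dphi t z) = (1 - t^2) / (A * A)).
 { unfold dphi. rewrite Cmod_div. rewrite Cmod_mult, Cmod_R. fold A. f_equal.
   apply Rabs_pos_eq. destruct (Rabs_def2 _ _ Ht). nra. apply Cmult_neq_0; auto. }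
 assert (Hz2 : Cmod z ^ 2 < 1). { generalize (Cmod_ge_0 z). intros. nra. }
 assert (Ht2 : t ^ 2 < 1). { destruct (Rabs_def2 _ _ Ht). nra. }
 assert (HB : 0 <= B) by apply Cmod_ge_0.
 split.
 - rewrite E1. apply Rmult_lt_reg_r with A; auto. unfold Rdiv. rewrite Rmult_assoc, Rinv_l by lra.
   assert (B ^ 2 < A ^ 2) by nra. nra.
 - rewrite E1, E2. apply (Rmult_eq_reg_r (A * A)); [|nra]. field_simplify; try lra.
Qed.

Definition pder (a : nat -> C) (N : nat) (w : C) : C := sum_n (fun k => (RtoC (INR k) * a k * Cpow w (k - 1))%C) N.
Definition comp (a : nat -> C) (N : nat) (t : R) (j : nat) : C :=
  match j with 0%nat => RtoC 0 | _ => sum_n (fun k => (a k * toC (P t k) j)%C) N end.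

Lemma comp_fderiv a N t z : Rabs t < 1 -> Cmod z < 1 ->
  ex_series (fun k => Cmod (comp a N t k * pow_n z k)) /\
  fderiv (comp a N t) z = (dphi t z * pder a N (phi t z))%C.
Proof. intros Ht Hz.
 assert (AP : forall k, acv (fun j => (a k * toC (P t k) j)%C) z).
 { intros k. apply acv_scal. apply (P_ev t z k Ht Hz). }
 assert (AD : forall k, acv (fun j => (a k * toC (dserR (P t k)) j)%C) z).
 { intros k. apply acv_scal. apply (P_ev t z k Ht Hz). }
 split.
 - assert (H := acv_sum _ N z AP). unfold acv, acs in H.
   apply (@ex_series_le R_AbsRing R_CompleteNormedModule _ (fun k => Cmod (sum_n (fun k0 : nat => (a k0 * toC (P t k0) k)%C) N * Cpow z k)%C)); [|exact H].
   intros k. change (norm (Cmod (comp a N t k * pow_n z k)%C)) with (Rabs (Cmod (comp a N t k * pow_n z k)%C)).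
   rewrite Rabs_pos_eq by apply Cmod_ge_0. rewrite pow_n_Cpow.
   destruct k. simpl. rewrite Cmult_0_l, Cmod_0. apply Cmod_ge_0. right. reflexivity.
 - unfold fderiv.
   set (u := fun k => (RtoC (INR k) * comp a N t k * pow_n z (k - 1))%C).
   assert (Hu : forall j, u (S j) = ((fun j => sum_n (fun k => (a k * toC (dserR (P t k)) j)%C) N) j * Cpow z j)%C).
   { intros j. unfold u. rewrite pow_n_Cpow. replace (S j - 1)%nat with j by lia. simpl comp.
     rewrite <- sum_n_multC_l. f_equal.
     apply sum_n_ext. intros k. unfold toC, dserR. rewrite RtoC_mult. Cring. }
   assert (Au : acs u). { apply (proj2 (ex_series_incr_1 (fun k => Cmod (u k)))).
     eapply ex_series_ext. 2: apply (acv_sum _ N z AD). intros j. simpl. rewrite Hu. reflexivity. }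
   rewrite Cseries_shift by auto.
   rewrite (Cseries_ext _ _ Hu). fold (ev (fun j => sum_n (fun k => (a k * toC (dserR (P t k)) j)%C) N) z).
   rewrite ev_sum by auto. unfold u. simpl. unfold pder. rewrite <- sum_n_multC_l.
   rewrite Cmult_0_l, Cmult_0_l, Cplus_0_l.
   apply sum_n_ext. intros k. rewrite ev_scal by (apply (P_ev t z k Ht Hz)).
   destruct (P_ev t z k Ht Hz) as [_ [_ [_ E]]]. rewrite E. Cring.
Qed.
Definition Z (m j : nat) : R := if Nat.eqb j m then 1 else 0.
Definition Lc (k j : nat) : R := INR k * (Z (k - 1) j - Z (S k) j).
Definition Dc (t : R) (k j : nat) : R := P t k j - Z k j - t * Lc k j.
Definition sh (t : R) (m j : nat) : R := if Nat.leb m j then Phi t (j - m) else 0.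
Definition Rr (t : R) (m : nat) : R :=
  match m with 0%nat => 0 | 1%nat => -1 | 2%nat => t | S (S (S m')) => (1 - t^2) * (-t)^m' end.
Definition Rsh (t : R) (m j : nat) : R := if Nat.leb m j then Rr t (j - m) else 0.

Lemma Z_same m : Z m m = 1.
Proof. unfold Z. rewrite Nat.eqb_refl. auto. Qed.
Lemma Z_diff m j : j <> m -> Z m j = 0.
Proof. intros H. unfold Z. apply Nat.eqb_neq in H. rewrite H. auto. Qed.
Lemma Z_abs m j : Rabs (Z m j) <= 1.
Proof. unfold Z. destruct (Nat.eqb j m); rewrite ?Rabs_R1, ?Rabs_R0; lra. Qed.
Lemma sh_lt t m j : (j < m)%nat -> sh t m j = 0.
Proof. intros H. unfold sh. destruct (Nat.leb_spec m j); auto; lia. Qed.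
Lemma Rsh_lt t m j : (j < m)%nat -> Rsh t m j = 0.
Proof. intros H. unfold Rsh. destruct (Nat.leb_spec m j); auto; lia. Qed.

Lemma Rr_abs t m : Rabs t <= 1 -> Rabs (Rr t m) <= 1.
Proof. intros Ht. destruct m as [|[|[|m]]]; simpl.
 apply Rabs_le; lra. apply Rabs_le; lra. lra.
 rewrite Rabs_mult, <- RPow_abs, Rabs_Ropp.
 destruct (Rabs_def2 t 2) as [H1 H2]. lra.
 assert (Rabs t * Rabs t <= 1) by (generalize (Rabs_pos t); nra).
 assert (Rabs (1 - t*(t*1)) <= 1). { apply Rabs_le. rewrite <- Rabs_mult in H. 
   assert (t*t = Rabs (t*t)). { rewrite Rabs_pos_eq; nra. } nra. }
 assert (Rabs t ^ m <= 1). { apply pow_le_1. split. apply Rabs_pos. lra. }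
 generalize (pow_le (Rabs t) m (Rabs_pos t)) (Rabs_pos (1 - t*(t*1))). intros; nra. Qed.

Lemma Rsh_abs t m j : Rabs t <= 1 -> Rabs (Rsh t m j) <= 1.
Proof. intros Ht. unfold Rsh. destruct (Nat.leb m j). apply Rr_abs; auto. rewrite Rabs_R0; lra. Qed.

Lemma sh_id t m j : sh t m j = Z (S m) j + t * (Z m j - Z (S (S m)) j) + t^2 * Rsh t m j.
Proof. unfold sh, Rsh. destruct (Nat.leb_spec m j).
 - remember (j - m)%nat as d. assert (j = m + d)%nat by lia. subst j.
   destruct d as [|[|[|d]]].
   + rewrite Nat.add_0_r. rewrite Z_same, (Z_diff (S m) m), (Z_diff (S (S m)) m) by lia. simpl. ring.
   + rewrite (Z_diff m (m+1)), (Z_diff (S (S m)) (m+1)) by lia. replace (m + 1)%nat with (S m) by lia. rewrite Z_same. simpl. ring.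
   + rewrite (Z_diff m (m+2)), (Z_diff (S m) (m+2)) by lia. replace (m + 2)%nat with (S (S m)) by lia. rewrite Z_same. simpl. ring.
   + rewrite (Z_diff m), (Z_diff (S m)), (Z_diff (S (S m))) by lia. simpl. ring.
 - rewrite (Z_diff m), (Z_diff (S m)), (Z_diff (S (S m))) by lia. ring.
Qed.

Lemma sum_ind_R (g : nat -> R) m N : sum_f_R0 (fun i => if Nat.eqb i m then g i else 0) N = if Nat.leb m N then g m else 0.
Proof. induction N.
 - simpl. destruct m; simpl; auto.
 - rewrite tech5, IHN. destruct (Nat.leb_spec m N).
   + destruct (Nat.leb_spec m (S N)); [|lia]. destruct (Nat.eqb_spec (S N) m); [lia|]. ring.
   + destruct (Nat.eqb_spec (S N) m).
     * subst. rewrite Nat.leb_refl. ring.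
     * destruct (Nat.leb_spec m (S N)); [lia|]. ring.
Qed.

Lemma sum_Z m j (f : nat -> R) : sum_f_R0 (fun i => Z m i * f (j - i)%nat) j = if Nat.leb m j then f (j - m)%nat else 0.
Proof. rewrite <- (sum_ind_R (fun i => f (j - i)%nat)). apply sum_eq. intros i _. unfold Z.
 destruct (Nat.eqb i m); ring. Qed.

Lemma P_succ_D t k j : Dc t (S k) j =
  t^2 * Rsh t k j + t * INR k * (sh t (k - 1) j - sh t (S k) j - Z k j + Z (S (S k)) j)
  + sum_f_R0 (fun i => Dc t k i * Phi t (j - i)%nat) j.
Proof. unfold Dc at 1. simpl P. unfold cprodR. rewrite sum_n_Reals.
 rewrite (sum_eq _ (fun i => (Z k i * Phi t (j - i)%nat + (Z (k - 1) i * Phi t (j - i)%nat - Z (S k) i * Phi t (j - i)%nat) * (t * INR k)) + Dc t k i * Phi t (j - i)%nat)).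
 2:{ intros i _. unfold Dc, Lc. ring. }
 rewrite plus_sum, plus_sum, <- scal_sum, minus_sum, !sum_Z.
 fold (sh t k j). fold (sh t (k - 1) j). fold (sh t (S k) j).
 rewrite (sh_id t k j). unfold Lc. simpl (S k - 1)%nat. rewrite Nat.sub_0_r. rewrite S_INR. ring.
Qed.
Lemma num1 k : 5 * (1 + 5 * INR (S k)) * 2^(S k) <= 256^(S k).
Proof. induction k. simpl. lra.
 rewrite (S_INR (S k)). replace (2 ^ S (S k)) with (2 * 2 ^ S k) by (simpl; ring).
 replace (256 ^ S (S k)) with (256 * 256 ^ S k) by (simpl; ring).
 assert (1 <= INR (S k)) by (apply (le_INR 1); lia). assert (0 <= 2 ^ S k) by (apply pow_le; lra).
 nra. Qed.

Lemma num2 k j : (k <= S j)%nat -> 5 * (1 + 5 * INR k) * 2^k <= 256^(S j).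
Proof. intros H. destruct k.
 - simpl. assert (256 ^ 1 <= 256 ^ S j) by (apply Rle_pow; lia || lra). simpl in H0. lra.
 - eapply Rle_trans. apply num1. apply Rle_pow. lra. lia. Qed.

Lemma geo j (c : nat -> R) : (forall m, 0 <= c m <= 1) -> c 0%nat <= 1/4 ->
  sum_f_R0 (fun i => 256^(S i) * c (j - i)%nat) j <= 256^(S j) * (1/4 + 1/255) - 256/255.
Proof. intros Hc H0. induction j.
 - simpl. lra.
 - rewrite decomp_sum by lia. simpl pred.
   rewrite (sum_eq (fun i => 256 ^ S (S i) * c (S j - S i)%nat) (fun i => (256^(S i) * c (j - i)%nat) * 256)).
   2:{ intros i _. simpl (S j - S i)%nat. simpl. ring. }
   rewrite <- scal_sum. replace (256 ^ S (S j)) with (256 * 256 ^ S j) by (simpl; ring).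
   generalize (Hc (S j - 0)%nat). simpl (256 ^ 1). intros. lra.
Qed.

Lemma D_bound t k j : Rabs t <= 1/4 -> Rabs (Dc t k j) <= t^2 * 256^(S j) / 2^k.
Proof. intros Ht. destruct (Rabs_def2 t (1/2)) as [Ht1 Ht2]. lra.
 assert (Ht0 : Rabs t < 1) by lra.
 revert j. induction k; intros j.
 - unfold Dc, Lc. simpl P. unfold Z. simpl INR.
   replace ((if Nat.eqb j 0 then 1 else 0) - (if Nat.eqb j 0 then 1 else 0) - t * (0 * ((if Nat.eqb j (0 - 1) then 1 else 0) - (if Nat.eqb j 1 then 1 else 0)))) with 0 by ring.
   rewrite Rabs_R0. apply Rmult_le_pos. apply Rmult_le_pos. nra. apply pow_le; lra. simpl; lra.
 - rewrite P_succ_D.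
   assert (HW : 0 < / 2 ^ k) by (apply Rinv_0_lt_compat, pow_lt; lra).
   replace (t ^ 2 * 256 ^ S j / 2 ^ S k) with (t^2 * (256 ^ S j * / 2^k / 2)) by (simpl; field; apply pow_nonzero; lra).
   set (Y := 256 ^ S j). assert (HY : 0 < Y) by (apply pow_lt; lra).
   assert (Htt : 0 <= t^2) by nra.
   assert (Cb : Rabs (sum_f_R0 (fun i => Dc t k i * Phi t (j - i)%nat) j) <= t^2 * (/ 2^k * (Y * (1/4 + 1/255)))).
   { eapply Rle_trans. apply sum_f_R0_triangle.
     eapply Rle_trans. apply (sum_Rle _ (fun i => (256 ^ S i * Rabs (Phi t (j - i)%nat)) * (t^2 * / 2^k))).
     { intros i _. rewrite Rabs_mult. generalize (IHk i) (Rabs_pos (Phi t (j - i)%nat)). intros.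
       unfold Rdiv in H. nra. }
     rewrite <- scal_sum. generalize (geo j (fun m => Rabs (Phi t m))). intros G.
     assert (sum_f_R0 (fun i => 256 ^ S i * Rabs (Phi t (j - i)%nat)) j <= Y * (1 / 4 + 1 / 255)).
     { eapply Rle_trans. apply G. intros; split. apply Rabs_pos. apply Phi_le1; auto. simpl. lra. fold Y. lra. }
     rewrite <- Rmult_assoc. apply Rmult_le_compat_l. nra. auto. }
   destruct (Nat.lt_ge_cases (S j) k) as [Hlt|Hge].
   + rewrite Rsh_lt, sh_lt, sh_lt, Z_diff, Z_diff by lia.
     replace (t ^ 2 * 0 + t * INR k * (0 - 0 - 0 + 0)) with 0 by ring. rewrite Rplus_0_l.
     eapply Rle_trans. apply Cb. apply Rmult_le_compat_l; auto. nra.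
   + assert (Bb : Rabs (t * INR k * (sh t (k - 1) j - sh t (S k) j - Z k j + Z (S (S k)) j)) <= t^2 * (5 * INR k)).
     { destruct k as [|k'].
       - simpl INR. rewrite Rmult_0_r, Rmult_0_l, Rabs_R0. lra.
       - replace (S k' - 1)%nat with k' by lia. rewrite (sh_id t k' j), (sh_id t (S (S k')) j).
         replace (Z (S k') j + t * (Z k' j - Z (S (S k')) j) + t ^ 2 * Rsh t k' j -
            (Z (S (S (S k'))) j + t * (Z (S (S k')) j - Z (S (S (S (S k')))) j) + t ^ 2 * Rsh t (S (S k')) j) -
            Z (S k') j + Z (S (S (S k'))) j)
           with (t * (Z k' j - Z (S (S k')) j - Z (S (S k')) j + Z (S (S (S (S k')))) j) + t^2 * (Rsh t k' j - Rsh t (S (S k')) j)) by ring.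
         rewrite Rabs_mult, Rabs_mult. rewrite (Rabs_pos_eq (INR (S k'))) by apply pos_INR.
         assert (Rabs (t * (Z k' j - Z (S (S k')) j - Z (S (S k')) j + Z (S (S (S (S k')))) j) + t^2 * (Rsh t k' j - Rsh t (S (S k')) j)) <= 5 * Rabs t).
         { eapply Rle_trans. apply Rabs_triang. rewrite !Rabs_mult.
           assert (Rabs (Z k' j - Z (S (S k')) j - Z (S (S k')) j + Z (S (S (S (S k')))) j) <= 4).
           { unfold Rminus. eapply Rle_trans. apply Rabs_triang. eapply Rle_trans. apply Rplus_le_compat_r. apply Rabs_triang.
             eapply Rle_trans. apply Rplus_le_compat_r. apply Rplus_le_compat_r. apply Rabs_triang.
             rewrite !Rabs_Ropp. generalize (Z_abs k' j) (Z_abs (S (S k')) j) (Z_abs (S (S (S (S k')))) j). lra. }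
           assert (Rabs (Rsh t k' j - Rsh t (S (S k')) j) <= 2).
           { unfold Rminus. eapply Rle_trans. apply Rabs_triang. rewrite Rabs_Ropp.
             generalize (Rsh_abs t k' j) (Rsh_abs t (S (S k')) j). lra. }
           rewrite <- RPow_abs. generalize (Rabs_pos t). intros. simpl.
           set (X1 := Rabs (Z k' j - Z (S (S k')) j - Z (S (S k')) j + Z (S (S (S (S k')))) j)) in *.
           set (X2 := Rabs (Rsh t k' j - Rsh t (S (S k')) j)) in *.
           assert (Rabs t * X1 <= Rabs t * 4) by (apply Rmult_le_compat_l; auto).
           assert (0 <= X2) by apply Rabs_pos.
           assert (Rabs t * (Rabs t * 1) * X2 <= Rabs t * (1/4) * 2).
           { apply Rmult_le_compat; try nra. }
           nra. }
         generalize (pos_INR (S k')) (Rabs_pos t). intros.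
         assert (t^2 = Rabs t * Rabs t) by (rewrite <- Rabs_mult; rewrite Rabs_pos_eq; nra).
         match goal with |- _ * ?B <= _ => set (Bk := B) in * end.
         rewrite H2. replace (Rabs t * Rabs t * (5 * INR (S k'))) with (Rabs t * INR (S k') * (5 * Rabs t)) by ring.
         apply Rmult_le_compat_l. nra. auto. }
     assert (Ab : Rabs (t^2 * Rsh t k j) <= t^2).
     { rewrite Rabs_mult. rewrite (Rabs_pos_eq (t^2)) by auto. generalize (Rsh_abs t k j). intros. nra. }
     assert (Nm : 5 * (1 + 5 * INR k) * 2^k <= Y) by (apply num2; lia).
     assert (Nm2 : (1 + 5 * INR k) <= / 2 ^ k * Y / 5).
     { assert (0 < 2^k) by (apply pow_lt; lra).
       apply (Rmult_le_reg_r (5 * 2^k)). nra. field_simplify. lra. apply pow_nonzero; lra. }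
     eapply Rle_trans. apply Rabs_triang. eapply Rle_trans. apply Rplus_le_compat_r. apply Rabs_triang.
     assert (t^2 * (1 + 5 * INR k) <= t^2 * (/ 2 ^ k * Y / 5)) by (apply Rmult_le_compat_l; auto).
     assert (t ^ 2 * (/ 2 ^ k * (Y * (1 / 4 + 1 / 255))) + t^2 * (/ 2 ^ k * Y / 5) <= t ^ 2 * (Y * / 2 ^ k / 2)).
     { rewrite <- Rmult_plus_distr_l. apply Rmult_le_compat_l; auto. 
       assert (0 < / 2 ^ k * Y) by (apply Rmult_lt_0_compat; auto). nra. }
     nra.
Qed.
Lemma sum_indC (g : nat -> C) m N : sum_n (fun k => if Nat.eqb k m then g k else RtoC 0) N = if Nat.leb m N then g m else RtoC 0.
Proof. induction N.
 - rewrite sum_O. destruct m; simpl; auto.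
 - rewrite sum_Sn, IHN. change plus with Cplus. destruct (Nat.leb_spec m N).
   + destruct (Nat.leb_spec m (S N)); [|lia]. destruct (Nat.eqb_spec (S N) m); [lia|]. Cring.
   + destruct (Nat.eqb_spec (S N) m).
     * subst. rewrite Nat.leb_refl. Cring.
     * destruct (Nat.leb_spec m (S N)); [lia|]. Cring.
Qed.

Definition ell (a : nat -> C) (j : nat) : C := (RtoC (INR (S j)) * a (S j) - RtoC (INR (j - 1)) * a (j - 1)%nat)%C.

Lemma comp_expand a N t j : (1 <= j)%nat -> (S j <= N)%nat ->
  comp a N t j = (a j + (RtoC t * ell a j + sum_n (fun k => (a k * RtoC (Dc t k j))%C) N))%C.
Proof. intros H1 H2. destruct j as [|j']; [lia|]. unfold comp.
 change (match S j' with 0%nat => RtoC 0 | S _ => sum_n (fun k => (a k * toC (P t k) (S j'))%C) N end) with (sum_n (fun k => (a k * toC (P t k) (S j'))%C) N).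
 set (j := S j').
 rewrite (sum_n_ext _ (fun k => ((if Nat.eqb k j then a k else RtoC 0) + (RtoC t * ((if Nat.eqb k (S j) then RtoC (INR k) * a k else RtoC 0) + (if Nat.eqb k (j - 1) then - (RtoC (INR k) * a k) else RtoC 0)) + a k * RtoC (Dc t k j)))%C)).
 - rewrite !sum_n_plusC, sum_n_multC_l, sum_n_plusC, !sum_indC.
   rewrite (proj2 (Nat.leb_le j N)), (proj2 (Nat.leb_le (S j) N)), (proj2 (Nat.leb_le (j - 1) N)) by lia.
   unfold ell. Cring.
 - intros k. unfold toC. replace (P t k j) with (Z k j + t * Lc k j + Dc t k j) by (unfold Dc; ring).
   unfold Lc. rewrite !RtoC_plus, !RtoC_mult, RtoC_minus.
   destruct (Nat.eqb_spec k j) as [E1|E1].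
   + subst k. rewrite Z_same, (Z_diff (j - 1)), (Z_diff (S j)) by lia.
     destruct (Nat.eqb_spec j (S j)); [lia|]. destruct (Nat.eqb_spec j (j - 1)); [lia|]. Cring.
   + rewrite (Z_diff k j) by lia. destruct (Nat.eqb_spec k (S j)) as [E2|E2].
     * subst k. simpl (S j - 1)%nat. rewrite Z_same, (Z_diff (S (S j))) by lia.
       destruct (Nat.eqb_spec (S j) (j - 1)); [lia|]. Cring.
     * rewrite (Z_diff (k - 1) j) by lia. destruct (Nat.eqb_spec k (j - 1)) as [E3|E3].
       -- assert (S k = j) by lia. rewrite H. rewrite Z_same. Cring.
       -- rewrite (Z_diff (S k) j) by lia. Cring.
Qed.

Definition dot (x y : C) : R := fst x * fst y + snd x * snd y.

Lemma dot_ge x y : - (Cmod x * Cmod y) <= dot x y.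
Proof. destruct x as [x1 x2], y as [y1 y2].
 assert (Hx := Cmod2_alt (x1,x2)). assert (Hy := Cmod2_alt (y1,y2)). unfold Re, Im in *.
 simpl fst in *; simpl snd in *. unfold dot. simpl fst; simpl snd.
 set (A := Cmod (x1,x2)) in *. set (B := Cmod (y1,y2)) in *.
 assert (0 <= A) by apply Cmod_ge_0. assert (0 <= B) by apply Cmod_ge_0.
 assert ((x1*y1+x2*y2)^2 <= (A*B)^2).
 { replace ((A*B)^2) with (A^2*B^2) by ring. rewrite Hx, Hy.
   assert (0 <= (x1*y2 - x2*y1)^2) by apply pow2_ge_0.
   replace ((x1 ^ 2 + x2 ^ 2) * (y1 ^ 2 + y2 ^ 2)) with ((x1*y1+x2*y2)^2 + (x1*y2 - x2*y1)^2) by ring. lra. }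
 assert (0 <= A * B) by nra. set (d := x1*y1+x2*y2) in *.
 apply Rnot_lt_le. intro Hlt. assert (A * B < - d) by lra.
 assert ((A*B)^2 < d^2) by (replace (d^2) with ((-d)*(-d)) by ring; simpl; nra). lra. Qed.

Lemma Cmod_plus_sq x y : Cmod x ^ 2 + 2 * dot x y <= Cmod (x + y)%C ^ 2.
Proof. destruct x as [x1 x2], y as [y1 y2]. rewrite !Cmod2_alt. unfold dot, Re, Im. simpl.
 assert (0 <= y1 * y1 + y2 * y2) by nra. nra. Qed.

Lemma dot_plus x y z : dot x (y + z)%C = dot x y + dot x z.
Proof. destruct x, y, z. unfold dot. simpl. ring. Qed.
Lemma dot_scal x (t : R) y : dot x (RtoC t * y)%C = t * dot x y.
Proof. destruct x, y. unfold dot. simpl. ring. Qed.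
Lemma dot_sym x y : dot x y = dot y x.
Proof. unfold dot. ring. Qed.

Lemma telescope (a : nat -> C) n : sum_n (fun j => INR j * dot (a j) (ell a j)) n = INR n * INR (S n) * dot (a n) (a (S n)).
Proof. induction n.
 - rewrite sum_O. simpl. ring.
 - rewrite sum_Sn, IHn. change plus with Rplus. unfold ell. simpl (S n - 1)%nat. rewrite Nat.sub_0_r.
   unfold Rminus. destruct (a n), (a (S n)), (a (S (S n))). unfold dot. simpl. ring.
Qed.
Lemma d_bound a N t j Sh : Rabs t <= 1/4 -> (forall M, sum_n (fun k => Cmod (a k) / 2^k) M <= Sh) ->
  Cmod (sum_n (fun k => (a k * RtoC (Dc t k j))%C) N) <= t^2 * 256^(S j) * Sh.
Proof. intros Ht HS. eapply Rle_trans. apply Cmod_sum_n. rewrite sum_n_Reals.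
 eapply Rle_trans. apply (sum_Rle _ (fun k => Cmod (a k) / 2^k * (t^2 * 256^(S j)))).
 - intros k _. rewrite Cmod_mult, Cmod_R. generalize (D_bound t k j Ht) (Cmod_ge_0 (a k)). intros.
   replace (Cmod (a k) / 2 ^ k * (t ^ 2 * 256 ^ S j)) with (Cmod (a k) * (t ^ 2 * 256 ^ S j / 2 ^ k)) by (field; apply pow_nonzero; lra).
   apply Rmult_le_compat_l; auto.
 - rewrite <- scal_sum. rewrite <- sum_n_Reals. generalize (HS N). intros.
   assert (0 <= t^2 * 256^(S j)) by (apply Rmult_le_pos; [nra | apply pow_le; lra]).
   apply Rmult_le_compat_l; auto.
Qed.

Lemma energy_ineq n N a t Sh : (S n <= N)%nat -> Rabs t <= 1/4 ->
  (forall M, sum_n (fun k => Cmod (a k) / 2^k) M <= Sh) ->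
  partial_energy n a + 2 * t * (INR n * INR (S n) * dot (a n) (a (S n)))
   - t^2 * (2 * Sh * sum_n (fun j => INR j * Cmod (a j) * 256^(S j)) n) <= partial_energy n (comp a N t).
Proof. intros HN Ht HS. unfold partial_energy. rewrite <- telescope.
 rewrite !sum_n_Reals.
 replace (sum_f_R0 (fun k => INR k * Cmod (a k) ^ 2) n + 2 * t * sum_f_R0 (fun j => INR j * dot (a j) (ell a j)) n -
   t ^ 2 * (2 * Sh * sum_f_R0 (fun j => INR j * Cmod (a j) * 256 ^ S j) n))
  with (sum_f_R0 (fun j => INR j * Cmod (a j) ^ 2 + INR j * dot (a j) (ell a j) * (2 * t) - INR j * Cmod (a j) * 256 ^ S j * (t ^ 2 * (2 * Sh))) n).
 2:{ rewrite minus_sum, plus_sum, <- !scal_sum. ring. }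
 apply sum_Rle. intros j Hj. destruct j as [|j'].
 - simpl INR. lra.
 - rewrite comp_expand by lia. set (j := S j') in *.
   set (x := a j). set (d := sum_n (fun k => (a k * RtoC (Dc t k j))%C) N).
   assert (Hd : Cmod d <= t^2 * 256^(S j) * Sh) by (apply d_bound; auto).
   generalize (Cmod_plus_sq x (RtoC t * ell a j + d)%C). rewrite dot_plus, dot_scal. intros H1.
   generalize (dot_ge x d). intros H2.
   assert (Cmod x * Cmod d <= Cmod x * (t^2 * 256^(S j) * Sh)) by (apply Rmult_le_compat_l; auto using Cmod_ge_0).
   assert (0 <= INR j) by apply pos_INR.
   assert (INR j * (Cmod x ^ 2 + 2 * (t * dot x (ell a j)) - 2 * (Cmod x * (t ^ 2 * 256 ^ S j * Sh))) <= INR j * Cmod (x + (RtoC t * ell a j + d))%C ^ 2).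
   { apply Rmult_le_compat_l; auto. lra. }
   lra.
Qed.
Lemma bloch_bound b x : admissible b -> Cmod x < 1 -> (1 - Cmod x ^ 2) * Cmod (fderiv b x) <= 1.
Proof. intros [_ [H0 H1]] Hx. unfold bloch_norm in H1. rewrite H0, Cmod_0, Rbar_plus_0_l in H1.
 destruct (Lub_Rbar_correct (fun r => exists z : C, Cmod z < 1 /\ r = (1 - Cmod z ^ 2) * Cmod (fderiv b z))) as [Hub _].
 assert (H2 := Hub ((1 - Cmod x ^ 2) * Cmod (fderiv b x)) (ex_intro _ x (conj Hx eq_refl))).
 assert (H3 := Rbar_le_trans _ _ (Finite 1) H2 H1). simpl in H3. auto. Qed.

Lemma deriv_series (q : R) : 0 <= q < 1 -> ex_series (fun k => INR k * q ^ (k - 1)).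
Proof. intros Hq. apply (ex_series_incr_1 (fun k => INR k * q ^ (k - 1))).
 exists (/ (1 - q) * / (1 - q)).
 eapply is_series_ext. 2: apply (is_series_mult_pos (fun k => q^k) (fun k => q^k)).
 - intros k. simpl (S k - 1)%nat. rewrite Nat.sub_0_r. rewrite <- sum_n_Reals.
   rewrite (sum_n_ext_loc _ (fun _ => q^k)). apply sum_n_const. intros i Hi. rewrite <- pow_add. f_equal. lia.
 - apply is_series_geom. rewrite Rabs_pos_eq; lra.
 - apply is_series_geom. rewrite Rabs_pos_eq; lra.
 - intros; apply pow_le; lra.
 - intros; apply pow_le; lra.
Qed.

Lemma deriv_abs_conv b r : analytic_on_disc b -> 0 <= r < 1 -> ex_series (fun k => INR k * Cmod (b k) * r ^ (k - 1)).
Proof. intros Ha Hr. set (rho := (1 + r) / 2).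
 assert (Hrho : Cmod (RtoC rho) < 1) by (rewrite Cmod_R, Rabs_pos_eq; unfold rho; lra).
 assert (H := Ha _ Hrho).
 assert (E : forall k, Cmod (b k * pow_n (RtoC rho) k)%C = Cmod (b k) * rho ^ k).
 { intros k. rewrite pow_n_Cpow, Cmod_mult, Cmod_pow, Cmod_R, Rabs_pos_eq; auto. unfold rho; lra. }
 set (M := Series (fun k => Cmod (b k * pow_n (RtoC rho) k)%C)).
 assert (HM : forall k, Cmod (b k) * rho ^ k <= M).
 { intros k. rewrite <- E. apply (term_le_Series (fun k => Cmod (b k * pow_n (RtoC rho) k)%C)); auto. intros; apply Cmod_ge_0. }
 assert (Hrho0 : 0 < rho) by (unfold rho; lra).
 assert (Hrr : r < rho) by (unfold rho; lra).
 set (q := r / rho). assert (Hq : 0 <= q < 1). { split. unfold q. apply Rmult_le_pos; [lra|]. left; apply Rinv_0_lt_compat; lra.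
   assert (q * rho = r) by (unfold q; field; lra). nra. }
 apply (@ex_series_le R_AbsRing R_CompleteNormedModule _ (fun k => M / rho * (INR k * q ^ (k - 1)))).
 - intros k. change (norm (INR k * Cmod (b k) * r ^ (k - 1))) with (Rabs (INR k * Cmod (b k) * r ^ (k - 1))).
   rewrite Rabs_pos_eq by (apply Rmult_le_pos; [apply Rmult_le_pos; [apply pos_INR|apply Cmod_ge_0]|apply pow_le; lra]).
   destruct k as [|k]. simpl. lra. simpl (S k - 1)%nat. rewrite Nat.sub_0_r.
   replace r with (q * rho) by (unfold q; field; lra). rewrite Rpow_mult_distr.
   generalize (HM (S k)). simpl pow. intros H1.
   assert (0 <= INR (S k) * q ^ k) by (apply Rmult_le_pos; [apply pos_INR | apply pow_le; lra]).
   assert (Cmod (b (S k)) * rho ^ k <= M / rho).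
   { apply (Rmult_le_reg_l rho); auto. replace (rho * (M / rho)) with M by (field; lra). nra. }
   replace (INR (S k) * Cmod (b (S k)) * (q ^ k * rho ^ k)) with ((INR (S k) * q ^ k) * (Cmod (b (S k)) * rho ^ k)) by ring.
   replace (M / rho * (INR (S k) * q ^ k)) with ((INR (S k) * q ^ k) * (M / rho)) by ring.
   apply Rmult_le_compat_l; auto.
 - apply (ex_series_scal_l (M / rho) (fun k => INR k * q ^ (k - 1))). apply deriv_series; auto.
Qed.
Lemma trunc_bloch b (zeta w : C) N : admissible b -> Cmod zeta < 1 -> Cmod w < 1 ->
  (1 - Cmod w ^ 2) * Cmod (pder (fun k => (b k * Cpow zeta k)%C) N w) <=
  1 + 2 * (Series (fun k => INR k * Cmod (b k) * Cmod zeta ^ (k - 1)) - sum_n (fun k => INR k * Cmod (b k) * Cmod zeta ^ (k - 1)) N).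
Proof. intros Hb Hz Hw. set (x := (zeta * w)%C).
 assert (Hxz : Cmod x = Cmod zeta * Cmod w) by apply Cmod_mult.
 generalize (Cmod_ge_0 zeta) (Cmod_ge_0 w). intros Hz0 Hw0.
 assert (Hx : Cmod x < 1) by (rewrite Hxz; nra).
 assert (Hxle : Cmod x <= Cmod zeta) by (rewrite Hxz; nra).
 set (u := fun k => (RtoC (INR k) * b k * pow_n x (k - 1))%C).
 set (W := fun k => INR k * Cmod (b k) * Cmod zeta ^ (k - 1)).
 assert (Hu : forall k, Cmod (u k) = INR k * Cmod (b k) * Cmod x ^ (k - 1)).
 { intros k. unfold u. rewrite pow_n_Cpow, !Cmod_mult, Cmod_R, Cmod_pow, Rabs_pos_eq by apply pos_INR. reflexivity. }
 assert (HuW : forall k, Cmod (u k) <= W k).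
 { intros k. rewrite Hu. unfold W. apply Rmult_le_compat_l. apply Rmult_le_pos; [apply pos_INR | apply Cmod_ge_0].
   apply pow_incr. split; auto using Cmod_ge_0. }
 assert (HW : ex_series W) by (apply deriv_abs_conv; [apply Hb | split; auto]).
 assert (Au : acs u) by (apply (acs_le _ W); auto).
 assert (Epder : pder (fun k => (b k * Cpow zeta k)%C) N w = (zeta * sum_n u N)%C).
 { unfold pder. rewrite <- sum_n_multC_l. apply sum_n_ext. intros k. unfold u. destruct k.
   - simpl. Cring.
   - replace (S k - 1)%nat with k by lia. change (pow_n x k) with (Cpow x k). unfold x. rewrite Cpow_mult. simpl Cpow. Cring. }
 assert (Ef : fderiv b x = Cseries u) by reflexivity.
 set (d := Cmod (Cseries u - sum_n u N)%C).
 assert (Hd : d <= 2 * (Series W - sum_n W N)).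
 { eapply Rle_trans. apply Cseries_tail; auto. apply Rmult_le_compat_l. lra.
   rewrite !Series_tail; auto. apply Series_le. intros k; split; auto using Cmod_ge_0.
   apply (ex_series_incr_n W (S N)); auto. }
 assert (HT : Cmod (sum_n u N) <= Cmod (fderiv b x) + d).
 { rewrite Ef. unfold d. assert (Eg : forall A B : C, A = (B + - (B - A))%C) by (intros; ring). rewrite (Eg (sum_n u N) (Cseries u)) at 1.
   eapply Rle_trans. apply Cmod_triangle. rewrite Cmod_opp. lra. }
 assert (HB := bloch_bound b x Hb Hx). rewrite Hxz in HB.
 rewrite Epder, Cmod_mult.
 assert (0 <= d) by apply Cmod_ge_0. assert (0 <= Cmod (fderiv b x)) by apply Cmod_ge_0.
 assert (K0 : 0 <= (1 - Cmod zeta) * (1 + Cmod zeta * Cmod w ^ 2)) by (apply Rmult_le_pos; nra).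
 assert (K1 : (1 - Cmod w ^ 2) * Cmod zeta <= 1 - (Cmod zeta * Cmod w) ^ 2) by nra.
 assert (K2 : 0 <= (1 - Cmod w ^ 2) * Cmod zeta <= 1) by (split; nra).
 assert (K3 : (1 - Cmod w ^ 2) * (Cmod zeta * Cmod (sum_n u N)) <= (1 - Cmod w ^ 2) * Cmod zeta * (Cmod (fderiv b x) + d)).
 { rewrite <- Rmult_assoc. apply Rmult_le_compat_l; [lra | auto]. }
 assert (K4 : (1 - Cmod w ^ 2) * Cmod zeta * Cmod (fderiv b x) <= (1 - (Cmod zeta * Cmod w) ^ 2) * Cmod (fderiv b x))
   by (apply Rmult_le_compat_r; auto).
 assert (K5 : (1 - Cmod w ^ 2) * Cmod zeta * d <= d) by nra.
 lra.
Qed.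

Lemma comp_admissible a N t : Rabs t < 1 ->
  (forall w, Cmod w < 1 -> (1 - Cmod w ^ 2) * Cmod (pder a N w) <= 1) -> admissible (comp a N t).
Proof. intros Ht Ha. split; [|split].
 - intros z Hz. apply (comp_fderiv a N t z Ht Hz).
 - reflexivity.
 - unfold bloch_norm. simpl (comp a N t 0). rewrite Cmod_0, Rbar_plus_0_l.
   destruct (Lub_Rbar_correct (fun r => exists z : C, Cmod z < 1 /\ r = (1 - Cmod z ^ 2) * Cmod (fderiv (comp a N t) z))) as [_ Hl].
   apply Hl. intros r [z [Hz Er]]. subst r. change ((1 - Cmod z ^ 2) * Cmod (fderiv (comp a N t) z) <= 1).
   destruct (comp_fderiv a N t z Ht Hz) as [_ E]. rewrite E, Cmod_mult.
   destruct (phi_bloch t z Ht Hz) as [Hp Hb].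
   rewrite <- Rmult_assoc, Hb. apply Ha; auto.
Qed.

Lemma extremal_le n b c : Finite (partial_energy n b) = M n -> admissible c -> partial_energy n c <= partial_energy n b.
Proof. intros HM Hc. destruct (Lub_Rbar_correct (fun r => exists c, admissible c /\ r = partial_energy n c)) as [Hub _].
 assert (H := Hub (partial_energy n c) (ex_intro _ c (conj Hc eq_refl))).
 fold (M n) in H. rewrite <- HM in H. simpl in H. auto. Qed.
Lemma tail_small (W : nat -> R) n0 eta : ex_series W -> 0 < eta ->
  exists N, (n0 <= N)%nat /\ 2 * (Series W - sum_n W N) <= eta.
Proof. intros HW He. assert (H : is_lim_seq (sum_n W) (Series W)) by apply (Series_correct W HW).
 apply is_lim_seq_spec in H. destruct (H (mkposreal (eta / 2) ltac:(lra))) as [N0 HN0].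
 exists (max n0 N0). split. lia. assert (Hh := HN0 (max n0 N0) ltac:(lia)). simpl in Hh.
 apply Rabs_def2 in Hh. lra. Qed.

Lemma le_eps A B C : (forall eta, 0 < eta < 1 -> A <= B + C * eta) -> 0 <= C -> A <= B.
Proof. intros H HC. destruct (Rle_dec A B) as [|Hn]; auto. apply Rnot_le_lt in Hn.
 set (eta := Rmin (1/2) ((A - B) / (2 * (C + 1)))).
 assert (He1 : 0 < eta). { unfold eta. apply Rmin_glb_lt. lra. apply Rdiv_lt_0_compat; lra. }
 assert (He2 : eta <= 1/2) by apply Rmin_l.
 assert (He3 : eta <= (A - B) / (2 * (C + 1))) by apply Rmin_r.
 assert (H1 := H eta ltac:(lra)).
 assert (C * eta <= (C + 1) * ((A - B) / (2 * (C + 1)))) by (apply Rmult_le_compat; lra).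
 replace ((C + 1) * ((A - B) / (2 * (C + 1)))) with ((A - B) / 2) in H0 by (field; lra). lra. Qed.

Lemma bernoulli r m : 0 <= r <= 1 -> 1 - INR m * (1 - r) <= r ^ m.
Proof. intros Hr. induction m. simpl. lra.
 rewrite S_INR. simpl pow. assert (r ^ m <= 1) by (apply pow_le_1; lra). assert (0 <= r^m) by (apply pow_le; lra).
 assert (0 <= INR m) by apply pos_INR. nra. Qed.

Lemma dot_scal2 (al be : R) x y : dot (RtoC al * x)%C (RtoC be * y)%C = al * be * dot x y.
Proof. destruct x, y. unfold dot. simpl. ring. Qed.

Lemma Cmod_le_half_series b : analytic_on_disc b -> ex_series (fun k => Cmod (b k) / 2 ^ k).
Proof. intros Ha. assert (Hh : Cmod (RtoC (1/2)) < 1) by (rewrite Cmod_R, Rabs_pos_eq; lra).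
 eapply ex_series_ext. 2: apply (Ha _ Hh). intros k. simpl.
 rewrite pow_n_Cpow, Cmod_mult, Cmod_pow, Cmod_R, Rabs_pos_eq by lra.
 unfold Rdiv. f_equal. replace (1 * / 2) with (/ 2) by field. rewrite pow_inv. auto. Qed.
Lemma pe_nonneg n c : 0 <= partial_energy n c.
Proof. unfold partial_energy. rewrite sum_n_Reals. apply cond_pos_sum. intros k.
 apply Rmult_le_pos. apply pos_INR. apply pow_le, Cmod_ge_0. Qed.

Lemma key_ineq n b (om : C) t : admissible b -> Finite (partial_energy n b) = M n -> Cmod om = 1 -> Rabs t <= 1/4 ->
  2 * t * (INR n * INR (S n) * dot (b n * Cpow om n)%C (b (S n) * Cpow om (S n))%C) <=
  t ^ 2 * (2 * Series (fun k => Cmod (b k) / 2 ^ k) * sum_n (fun j => INR j * Cmod (b j) * 256 ^ S j) n).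
Proof. intros Hb HM Hom Ht.
 set (Sh := Series (fun k => Cmod (b k) / 2 ^ k)).
 set (K := 2 * Sh * sum_n (fun j => INR j * Cmod (b j) * 256 ^ S j) n).
 set (X := INR n * INR (S n) * dot (b n * Cpow om n)%C (b (S n) * Cpow om (S n))%C).
 set (E := partial_energy n b).
 assert (HE : 0 <= E) by apply pe_nonneg.
 assert (Hhalf := Cmod_le_half_series b (proj1 Hb)).
 assert (HSh : 0 <= Sh). { apply Series_nonneg; auto. intros k. apply Rmult_le_pos. apply Cmod_ge_0. left; apply Rinv_0_lt_compat, pow_lt; lra. }
 assert (HK : 0 <= K). { unfold K. apply Rmult_le_pos. lra. rewrite sum_n_Reals. apply cond_pos_sum. intros k.
   apply Rmult_le_pos. apply Rmult_le_pos. apply pos_INR. apply Cmod_ge_0. apply pow_le; lra. }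
 assert (Ht2 : 0 <= t^2) by nra.
 assert (Htt : Rabs t < 1) by lra.
 assert (StepA : forall r, 0 < r < 1 -> r^(2*n) * E + 2 * t * r^(2*n+1) * X <= E + t^2 * K).
 { intros r Hr. set (zeta := (RtoC r * om)%C).
   assert (Hz : Cmod zeta = r) by (unfold zeta; rewrite Cmod_mult, Cmod_R, Hom, Rabs_pos_eq; lra).
   set (W := fun k => INR k * Cmod (b k) * Cmod zeta ^ (k - 1)).
   assert (HW : ex_series W) by (apply deriv_abs_conv; [apply Hb|]; rewrite Hz; lra).
   assert (HW0 : forall k, 0 <= W k).
   { intros k. unfold W. apply Rmult_le_pos. apply Rmult_le_pos. apply pos_INR. apply Cmod_ge_0. apply pow_le, Cmod_ge_0. }
   apply (le_eps _ _ (3 * (E + t^2 * K))); [|nra].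
   intros eta Heta.
   destruct (tail_small W (S n) eta HW) as [N [HN Heps]]. lra.
   set (eps := 2 * (Series W - sum_n W N)) in *.
   assert (Heps0 : 0 <= eps).
   { unfold eps. rewrite Series_tail by auto. apply Rmult_le_pos. lra. apply Series_nonneg. intros; auto.
     apply (ex_series_incr_n W (S N)); auto. }
   set (lam := / (1 + eps)).
   assert (Hlam : 0 < lam <= 1).
   { unfold lam. split. apply Rinv_0_lt_compat; lra. rewrite <- Rinv_1. apply Rinv_le_contravar; lra. }
   assert (Hlam2 : lam * (1 + eps) = 1) by (unfold lam; field; lra).
   set (a := fun k => (RtoC lam * (b k * Cpow zeta k))%C).
   assert (Hadm : admissible (comp a N t)).
   { apply comp_admissible. auto.
     intros w Hw.
     assert (Ep : pder a N w = (RtoC lam * pder (fun k => (b k * Cpow zeta k)%C) N w)%C).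
     { unfold pder, a. rewrite <- sum_n_multC_l. apply sum_n_ext. intros; Cring. }
     rewrite Ep, Cmod_mult, Cmod_R, Rabs_pos_eq by lra.
     assert (Hzz : Cmod zeta < 1) by lra.
     generalize (trunc_bloch b zeta w N Hb Hzz Hw). fold W. fold eps. intros Hbw.
     replace ((1 - Cmod w ^ 2) * (lam * Cmod (pder (fun k => (b k * Cpow zeta k)%C) N w)))
       with (lam * ((1 - Cmod w ^ 2) * Cmod (pder (fun k => (b k * Cpow zeta k)%C) N w))) by ring.
     apply Rle_trans with (lam * (1 + eps)); [apply Rmult_le_compat_l; lra | lra]. }
   assert (Hle := extremal_le n b _ HM Hadm). fold E in Hle.
   assert (Hca : forall k, Cmod (a k) = lam * r^k * Cmod (b k)).
   { intros k. unfold a. rewrite !Cmod_mult, Cmod_R, Cmod_pow, Hz, Rabs_pos_eq by lra. ring. }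
   assert (HcaB : forall k, Cmod (a k) <= Cmod (b k)).
   { intros k. rewrite Hca. assert (r^k <= 1) by (apply pow_le_1; lra). assert (0 <= r^k) by (apply pow_le; lra).
     generalize (Cmod_ge_0 (b k)). intros. assert (lam * r^k <= 1) by nra. nra. }
   assert (HSa : forall Mx, sum_n (fun k => Cmod (a k) / 2^k) Mx <= Sh).
   { intros Mx. eapply Rle_trans. 2: apply (sum_le_Series _ Mx); auto.
     rewrite !sum_n_Reals. apply sum_Rle. intros k _. unfold Rdiv. apply Rmult_le_compat_r; auto.
     left; apply Rinv_0_lt_compat, pow_lt; lra.
     intros k. apply Rmult_le_pos. apply Cmod_ge_0. left; apply Rinv_0_lt_compat, pow_lt; lra. }
   assert (HEI := energy_ineq n N a t Sh HN Ht HSa).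
   assert (P1 : lam^2 * (r^(2*n) * E) <= partial_energy n a).
   { unfold E, partial_energy. rewrite !sum_n_Reals. rewrite scal_sum, scal_sum. apply sum_Rle. intros j Hj.
     rewrite Hca. assert (r^n <= r^j) by (apply pow_decr; lra || lia). assert (0 <= r^n) by (apply pow_le; lra).
     assert (r^(2*n) <= (r^j)^2) by (rewrite pow_mult; replace ((r^2)^n) with ((r^n)^2) by (rewrite <- !pow_mult; f_equal; lia); nra).
     assert (0 <= INR j * Cmod (b j) ^ 2) by (apply Rmult_le_pos; [apply pos_INR | apply pow_le, Cmod_ge_0]).
     assert (0 <= lam ^ 2) by nra.
     replace (INR j * (lam * r ^ j * Cmod (b j)) ^ 2) with ((INR j * Cmod (b j) ^ 2 * lam ^ 2) * (r^j)^2) by ring.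
     replace (INR j * Cmod (b j) ^ 2 * r ^ (2 * n) * lam ^ 2) with ((INR j * Cmod (b j) ^ 2 * lam ^ 2) * r ^ (2 * n)) by ring.
     apply Rmult_le_compat_l; auto. nra. }
   assert (P2 : INR n * INR (S n) * dot (a n) (a (S n)) = lam^2 * r^(2*n+1) * X).
   { unfold a, X, zeta. rewrite !Cpow_mult, <- !RtoC_pow.
     replace (RtoC lam * (b n * (RtoC (r ^ n) * Cpow om n)))%C with (RtoC (lam * r^n) * (b n * Cpow om n))%C by (rewrite RtoC_mult; Cring).
     replace (RtoC lam * (b (S n) * (RtoC (r ^ S n) * Cpow om (S n))))%C with (RtoC (lam * r^S n) * (b (S n) * Cpow om (S n)))%C by (rewrite RtoC_mult; Cring).
     rewrite dot_scal2. replace (2 * n + 1)%nat with (n + S n)%nat by lia. rewrite pow_add. ring. }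
   assert (P3 : sum_n (fun j => INR j * Cmod (a j) * 256^(S j)) n <= sum_n (fun j => INR j * Cmod (b j) * 256 ^ S j) n).
   { rewrite !sum_n_Reals. apply sum_Rle. intros j _. apply Rmult_le_compat_r. apply pow_le; lra.
     apply Rmult_le_compat_l. apply pos_INR. auto. }
   assert (P4 : t^2 * (2 * Sh * sum_n (fun j => INR j * Cmod (a j) * 256^(S j)) n) <= t^2 * K).
   { unfold K. apply Rmult_le_compat_l; auto. apply Rmult_le_compat_l; auto. lra. }
   rewrite P2 in HEI.
   set (A := r ^ (2 * n) * E + 2 * t * r ^ (2 * n + 1) * X).
   assert (HA : lam^2 * A <= E + t^2 * K).
   { replace (lam^2 * A) with (lam^2 * (r^(2*n) * E) + 2 * t * (lam^2 * r^(2*n+1) * X)) by (unfold A; ring).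
     set (Q := 2 * t * (lam ^ 2 * r ^ (2 * n + 1) * X)) in *. set (T := t ^ 2 * (2 * Sh * sum_n (fun j : nat => INR j * Cmod (a j) * 256 ^ S j) n)) in *. set (U := lam ^ 2 * (r ^ (2 * n) * E)) in *. clearbody Q T U.
     assert (S1 : U + Q <= partial_energy n a + Q) by lra.
     assert (S2 : partial_energy n a + Q <= E + T) by (generalize HEI Hle; clear; intros; lra).
     lra. }
   assert (HtK : 0 <= t^2 * K) by (apply Rmult_le_pos; auto).
   assert (HB3 : 0 <= 3 * (E + t^2 * K) * eta) by (apply Rmult_le_pos; [apply Rmult_le_pos|]; lra).
   destruct (Rle_dec A 0). lra.
   assert (A = (1 + eps)^2 * (lam^2 * A)) by (replace ((1 + eps)^2 * (lam^2 * A)) with ((lam * (1 + eps))^2 * A) by ring; rewrite Hlam2; ring).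
   assert ((1 + eps)^2 <= 1 + 3 * eta) by nra.
   assert (0 <= E + t^2 * K) by lra.
   assert (A <= (1 + eps)^2 * (E + t^2 * K)) by (rewrite H at 1; apply Rmult_le_compat_l; [nra | auto]).
   assert ((1 + eps)^2 * (E + t^2 * K) <= (1 + 3 * eta) * (E + t^2 * K)) by (apply Rmult_le_compat_r; auto).
   lra. }
 set (Cc := INR (2 * n) * E + Rabs (2 * t * X) * INR (2 * n + 1)).
 apply (le_eps _ _ Cc).
 - intros d Hd. assert (H := StepA (1 - d) ltac:(lra)).
   assert (B1 := bernoulli (1 - d) (2 * n) ltac:(lra)).
   assert (B2 := bernoulli (1 - d) (2 * n + 1) ltac:(lra)).
   assert (B3 : (1 - d) ^ (2 * n + 1) <= 1) by (apply pow_le_1; lra).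
   assert (I1 : (1 - INR (2 * n) * (1 - (1 - d))) * E <= (1 - d) ^ (2 * n) * E) by (apply Rmult_le_compat_r; auto).
   assert (I2 : 2 * t * X - Rabs (2 * t * X) * INR (2 * n + 1) * d <= 2 * t * (1 - d) ^ (2 * n + 1) * X).
   { destruct (Rcase_abs (2 * t * X)) as [Hn|Hp].
     - rewrite Rabs_left by auto. assert (0 <= INR (2 * n + 1)) by apply pos_INR.
       replace (2 * t * (1 - d) ^ (2 * n + 1) * X) with ((2 * t * X) * (1 - d) ^ (2 * n + 1)) by ring.
       assert (0 <= d) by lra. nra.
     - rewrite Rabs_right by auto.
       replace (2 * t * (1 - d) ^ (2 * n + 1) * X) with ((2 * t * X) * (1 - d) ^ (2 * n + 1)) by ring.
       assert ((2 * t * X) * (1 - INR (2 * n + 1) * (1 - (1 - d))) <= (2 * t * X) * (1 - d) ^ (2 * n + 1)) by (apply Rmult_le_compat_l; lra).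
       nra. }
   unfold Cc. nra.
 - unfold Cc. apply Rplus_le_le_0_compat. apply Rmult_le_pos; auto. apply pos_INR.
   apply Rmult_le_pos. apply Rabs_pos. apply pos_INR.
Qed.
Lemma X_zero (X K : R) : 0 <= K -> (forall t, Rabs t <= 1/4 -> 2 * t * X <= t^2 * K) -> X = 0.
Proof. intros HK H. set (m := Rmin (1/4) (Rabs X / (K + 1))).
 destruct (Req_dec X 0) as [|HX]; auto. exfalso.
 assert (HaX : 0 < Rabs X) by (apply Rabs_pos_lt; auto).
 assert (Hm0 : 0 < m) by (unfold m; apply Rmin_glb_lt; [lra | apply Rdiv_lt_0_compat; lra]).
 assert (Hm1 : m <= 1/4) by apply Rmin_l.
 assert (Hm2 : m <= Rabs X / (K + 1)) by apply Rmin_r.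
 assert (Hm3 : m * K <= Rabs X / (K + 1) * K) by (apply Rmult_le_compat_r; auto).
 assert (Hm4 : Rabs X / (K + 1) * K < Rabs X).
 { apply (Rmult_lt_reg_r (K + 1)). lra. replace (Rabs X / (K + 1) * K * (K + 1)) with (Rabs X * K) by (field; lra). nra. }
 destruct (Rcase_abs X) as [Hn|Hp].
 - assert (H1 := H (- m) ltac:(rewrite Rabs_Ropp, Rabs_pos_eq; lra)). rewrite Rabs_left in * by auto. nra.
 - assert (H1 := H m ltac:(rewrite Rabs_pos_eq; lra)). rewrite Rabs_right in * by auto. nra.
Qed.

Lemma dot_rot p q u : dot (p * u)%C (q * u)%C = (fst u ^ 2 + snd u ^ 2) * dot p q.
Proof. destruct p, q, u. unfold dot. simpl. ring. Qed.
Lemma dot_rot_i p q u : dot (p * u)%C (q * (Ci * u))%C = (fst u ^ 2 + snd u ^ 2) * (snd p * fst q - fst p * snd q).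
Proof. destruct p, q, u. unfold dot. simpl. ring. Qed.

Theorem mainTheorem5 (n : nat) (b : nat -> C) :
  (1 <= n)%nat ->
  admissible b ->
  Finite (partial_energy n b) = M n ->
  b n = RtoC 0 \/ b (S n) = RtoC 0.
Proof. intros Hn Hb HM.
 set (K := 2 * Series (fun k => Cmod (b k) / 2 ^ k) * sum_n (fun j => INR j * Cmod (b j) * 256 ^ S j) n).
 assert (HK : 0 <= K).
 { unfold K. apply Rmult_le_pos. apply Rmult_le_pos. lra. apply Series_nonneg.
   intros k. apply Rmult_le_pos. apply Cmod_ge_0. left; apply Rinv_0_lt_compat, pow_lt; lra.
   apply Cmod_le_half_series, Hb.
   rewrite sum_n_Reals. apply cond_pos_sum. intros k.
   apply Rmult_le_pos. apply Rmult_le_pos. apply pos_INR. apply Cmod_ge_0. apply pow_le; lra. }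
 assert (X1 := X_zero _ K HK (fun t Ht => key_ineq n b (RtoC 1) t Hb HM Cmod_1 Ht)).
 assert (X2 := X_zero _ K HK (fun t Ht => key_ineq n b Ci t Hb HM Cmod_Ci Ht)).
 assert (Hnn : 0 < INR n * INR (S n)).
 { apply Rmult_lt_0_compat; apply lt_0_INR; lia. }
 apply Rmult_integral in X1. apply Rmult_integral in X2.
 assert (D1 : dot (b n) (b (S n)) = 0).
 { destruct X1 as [X1|X1]. lra. rewrite Cpow_1_l, Cpow_1_l in X1. rewrite dot_rot in X1. simpl in X1. lra. }
 assert (Hu : fst (Cpow Ci n) ^ 2 + snd (Cpow Ci n) ^ 2 = 1).
 { rewrite <- Cmod2_alt. rewrite Cmod_pow, Cmod_Ci, pow1. ring. }
 assert (D2 : snd (b n) * fst (b (S n)) - fst (b n) * snd (b (S n)) = 0).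
 { destruct X2 as [X2|X2]. lra. change (Cpow Ci (S n)) with (Ci * Cpow Ci n)%C in X2.
   rewrite dot_rot_i, Hu in X2. lra. }
 unfold dot in D1.
 assert (E : (Cmod (b n) * Cmod (b (S n))) ^ 2 = 0).
 { rewrite Rpow_mult_distr, !Cmod2_alt. unfold Re, Im.
   replace ((fst (b n) ^ 2 + snd (b n) ^ 2) * (fst (b (S n)) ^ 2 + snd (b (S n)) ^ 2)) with
     ((fst (b n) * fst (b (S n)) + snd (b n) * snd (b (S n)))^2 + (snd (b n) * fst (b (S n)) - fst (b n) * snd (b (S n)))^2) by ring.
   rewrite D1, D2. ring. }
 assert (E' : Cmod (b n) * Cmod (b (S n)) = 0).
 { destruct (Req_dec (Cmod (b n) * Cmod (b (S n))) 0); auto. exfalso. apply (pow_nonzero _ 2 H). auto. }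
 apply Rmult_integral in E'. destruct E' as [E1|E1]. - left. apply Cmod_eq_0. auto.
 - right. apply Cmod_eq_0. auto.
Qed.
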